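(* Let $S$ be the set obtained after $i-1$ iterations of BLITS (calling the SIEVE subroutine), and let $O \in \arg\max_{|S'|\le k} f(S')$. Then $\mathbb{E}[f(O\cup S)] \ge (1-1/r)^{i-1}\,\texttt{OPT}$.
   Context: $N$ is a ground set with $|N|=n$, $f:2^N\to\mathbb{R}_{\ge0}$ is non-negative submodular (not necessarily monotone), $k$ is a cardinality constraint, $\texttt{OPT}=\max_{|S|\le k} f(S)$. $f_S(T) = f(S\cup T)-f(S)$, $f_S(a) = f_S(\{a\})$. A dummy element $a$ satisfies $f_S(a)=0$ for all $S$. $\mathcal{U}(X)$ is the uniform distribution over subsets of $X$ of size exactly $k/r$, and $\Delta(a,S,X) := \mathbb{E}_{R\sim\mathcal{U}(X)}[f_{S\cup(R\setminus\{a\})}(a)]$. SIEVE$(S,k,i,r)$ (idealized, with parameter $\epsilon>0$, exact $\texttt{OPT}$ and exact expectations): $X\leftarrow N$, $t \leftarrow \frac{1-\epsilon/2}{2}((1-1/r)^{i-1}(1-\epsilon/2)\texttt{OPT} - f(S))$; while $|X|>k$: $X^+\leftarrow\{a\in X:\Delta(a,S,X)\ge0\}$; if $\mathbb{E}_{R\sim\mathcal{U}(X)}[f_S(R\cap X^+)]\ge t/r$ return $R\cap X^+$ with $R\sim\mathcal{U}(X)$; else $X\leftarrow\{a\in X:\Delta(a,S,X)\ge(1+\epsilon/4)t/k\}$. After the loop: add $k-|X|$ dummy elements to $X$, set $X^+\leftarrow\{a\in X:\Delta(a,S,X)\ge0\}$, return $R\cap X^+$ with $R\sim\mathcal{U}(X)$.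 BLITS with parameter $r$: $S\leftarrow\emptyset$; for $i=1,\dots,r$, $S\leftarrow S\cup$ SIEVE$(S,k,i,r)$; return $S$. *)

(* Defs.v *)
(* Idealized BLITS / SIEVE as an exact finite distribution. *)
From mathcomp Require Import all_boot all_order all_algebra.
Set Implicit Arguments. Unset Strict Implicit. Unset Printing Implicit Defensive.
Import Order.TTheory GRing.Theory Num.Theory.
Local Open Scope ring_scope.

Section Blits.
Context {R : realFieldType} {N : finType}.

Definition submodular (f : {set N} -> R) : Prop :=
  forall A B : {set N}, f (A :|: B) + f (A :&: B) <= f A + f B.

Definition usets (T : finType) (X : {set T}) (m : nat) : {set {set T}} :=
  [set A : {set T} | (A \subset X) && (#|A| == m)].

Definition avg_sets (T : finType) (X : {set T}) (m : nat) (g : {set T} -> R) : R :=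
  (\sum_(A in usets X m) g A) / #|usets X m|%:R.

(* A finite sub-distribution on outcomes; [None] = the run does not terminate. *)
Definition dist := seq (R * option {set N}).

Definition uniform_dist (T : finType) (X : {set T}) (m : nat) (h : {set T} -> {set N})
  : dist := [seq ((#|usets X m|%:R)^-1, Some (h A)) | A <- enum (usets X m)].

Definition Delta (T : finType) (fT : {set T} -> R) (m : nat) (a : T) (S X : {set T}) : R :=
  avg_sets X m (fun A => fT (a |: (S :|: (A :\ a))) - fT (S :|: (A :\ a))).

Variables (f : {set N} -> R) (k r : nat) (eps : R).

Definition OPT : R := \big[Num.max/f set0]_(A : {set N} | (#|A| <= k)%N) f A.

(* ground set extended with k dummy elements (inr j); f ignores dummies *)
Definition ext_f (A : {set (N + 'I_k)%type}) : R := f (inl @^-1: A).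

Definition threshold (S : {set N}) (i : nat) : R :=
  (1 - eps / 2) / 2 * ((1 - (r%:R)^-1) ^+ i.-1 * (1 - eps / 2) * OPT - f S).

(* after the while loop: pad X with k - |X| dummies, sample, drop dummies *)
Definition sieve_final (S X : {set N}) : dist :=
  let X' := (inl @: X) :|: [set (@inr N 'I_k j) | j : 'I_k & (j < k - #|X|)%N] in
  let S' := inl @: S in
  let Xp := [set a in X' | 0 <= Delta ext_f (k %/ r) a S' X'] in
  uniform_dist X' (k %/ r) (fun A => inl @^-1: (A :&: Xp)).

(* the while loop; [fuel] is never exhausted (X strictly shrinks, fuel = n+2);
   if the filter does not change X the loop would run forever: outcome None *)
Fixpoint sieve_loop (S : {set N}) (i fuel : nat) (X : {set N}) : dist :=
  match fuel with
  | 0 => [:: (1, None)]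
  | fuel'.+1 =>
    if (k < #|X|)%N then
      let t := threshold S i in
      let Xp := [set a in X | 0 <= Delta f (k %/ r) a S X] in
      if t / r%:R <= avg_sets X (k %/ r) (fun A => f (S :|: (A :&: Xp)) - f S)
      then uniform_dist X (k %/ r) (fun A => A :&: Xp)
      else
        let X' := [set a in X | (1 + eps / 4) * t / k%:R <= Delta f (k %/ r) a S X] in
        if X' == X then [:: (1, None)] else sieve_loop S i fuel' X'
    else sieve_final S X
  end.

Definition sieve (S : {set N}) (i : nat) : dist := sieve_loop S i #|N|.+2 [set: N].

(* distribution of S after m further iterations of BLITS, the next one being
   iteration i, starting from the current set S *)
Fixpoint blits_run (m i : nat) (S : {set N}) : dist :=
  match m with
  | 0 => [:: (1, Some S)]
  | m'.+1 =>
    flatten [seq (let: (w, o) := p in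
                  match o with
                  | None => [:: (w, None)]
                  | Some T => [seq (w * q.1, q.2) | q <- blits_run m' i.+1 (S :|: T)]
                  end) | p <- sieve S i]
  end.

End Blits.

Definition expect {R : realFieldType} {N : finType} (d : @dist R N) (g : {set N} -> R) : R :=
  \sum_(p <- d) p.1 * (if p.2 is Some A then g A else 0).

Definition diverge_prob {R : realFieldType} {N : finType} (d : @dist R N) : R :=
  \sum_(p <- d) (if p.2 is None then p.1 else 0).

(* Main.v *)
Require Import Defs.
From mathcomp Require Import all_boot all_order all_algebra.
From mathcomp Require Import ring lra zify.
Import Order.TTheory GRing.Theory Num.Theory.
Local Open Scope ring_scope.

Section H.
Context {R : realFieldType} {N : finType}.
Implicit Types (d : @dist R N) (g : {set N} -> R).

Definition nonneg d := all (fun p : R * option {set N} => 0 <= p.1) d.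
Definition Wt d := expect d (fun _ => 1).
Definition pr d (b : N) := expect d (fun A => (b \in A)%:R).

Lemma expect_ext d g1 g2 : (forall A, g1 A = g2 A) -> expect d g1 = expect d g2.
Proof. by move=> h; apply eq_bigr => -[w [A|]] _ //=; rewrite h. Qed.

Lemma expectD d g1 g2 : expect d (fun A => g1 A + g2 A) = expect d g1 + expect d g2.
Proof. rewrite /expect -big_split; apply eq_bigr => -[w [A|]] _ /=; ring. Qed.

Lemma expectZ d c g : expect d (fun A => c * g A) = c * expect d g.
Proof. rewrite /expect mulr_sumr; apply eq_bigr => -[w [A|]] _ /=; ring. Qed.

Lemma expect_le d g1 g2 : nonneg d -> (forall A, g1 A <= g2 A) -> expect d g1 <= expect d g2.
Proof.
move=> /allP nn h; rewrite /expect big_seq [X in _ <= X]big_seq; apply: ler_sum => -[w [A|]] /nn /= w0.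
  by apply: ler_wpM2l. by [].
Qed.

Lemma expect_cst d c : expect d (fun _ => c) = Wt d * c.
Proof. rewrite /Wt mulrC -expectZ; apply eq_bigr => -[w [A|]] _ /=; ring. Qed.

Lemma expect_ge0 d g : nonneg d -> (forall A, 0 <= g A) -> 0 <= expect d g.
Proof. move=> nn h; rewrite -[0](mulr0 (Wt d)) -expect_cst; exact: expect_le. Qed.

Lemma buch_aux g d : submodular g -> (forall A, 0 <= g A) -> nonneg d ->
  forall n (U : {set N}), #|U| = n -> forall c P, 0 <= c -> c <= P ->
  (forall a, a \in U -> c <= pr d a /\ pr d a <= P) ->
  (Wt d - P) * g set0 + c * g U <= expect d (fun A => g (A :&: U)).
Proof.
move=> sub g0 nn; elim=> [|n IH] U hU c P c0 cP hpr.
  move/cards0_eq: hU => ->.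
  rewrite (@expect_ext d _ (fun _ => g set0)); last by move=> A; rewrite setI0.
  rewrite (expect_cst d (g set0)).
  have: 0 <= (P - c) * g set0 by apply: mulr_ge0; rewrite ?subr_ge0.
  lra.
have [a0 a0U] : exists a0, a0 \in U by apply/card_gt0P; rewrite hU.
have [a aU amin] : exists2 a, a \in U & forall b, b \in U -> pr d a <= pr d b.
  by case: (arg_minP (pr d) a0U) => a aU h; exists a.
have hU' : #|U :\ a| = n by move: hU; rewrite (cardsD1 a) aU add1n => -[].
have pa0 : 0 <= pr d a by apply: expect_ge0 => // A; rewrite ler0n.
have [ca paP] := hpr a aU.
have IH' := IH (U :\ a) hU' (pr d a) P pa0 paP.
have {IH'} IH' : (Wt d - P) * g set0 + pr d a * g (U :\ a)
    <= expect d (fun A => g (A :&: (U :\ a))).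
  apply: IH' => b; rewrite in_setD1 => /andP[_ bU]; split; [exact: amin | by case: (hpr b bU)].
have pt : forall A, g (A :&: (U :\ a)) + (g U - g (U :\ a)) * (a \in A)%:R <= g (A :&: U).
  move=> A; case aA: (a \in A) => /=.
    have := sub (A :&: U) (U :\ a).
    have -> : (A :&: U) :|: (U :\ a) = U.
      apply/setP => x; rewrite !inE; case: (eqVneq x a) => [->|_] /=; first by rewrite aA aU.
      by case: (x \in A); case: (x \in U).
    have -> : (A :&: U) :&: (U :\ a) = A :&: (U :\ a).
      apply/setP => x; rewrite !inE; by case: (x \in A); case: (x \in U); case: (x == a).
    lra.
  have -> : A :&: (U :\ a) = A :&: U.
    apply/setP => x; rewrite !inE; case: (eqVneq x a) => [->|_] /=; by rewrite ?aA ?andbF.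
  lra.
have := @expect_le d _ _ nn pt; rewrite expectD expectZ -/(pr d a).
have : c * g U <= pr d a * g U by apply: ler_wpM2r.
lra.
Qed.

Lemma buch g d P : submodular g -> (forall A, 0 <= g A) -> nonneg d -> 0 <= P ->
  (forall a, pr d a <= P) -> (Wt d - P) * g set0 <= expect d g.
Proof.
move=> sub g0 nn P0 hP.
have := @buch_aux g d sub g0 nn _ setT erefl 0 P (lexx 0) P0.
rewrite (@expect_ext d _ g); last by move=> A; rewrite setIT.
have : 0 <= 0 * g setT by rewrite mul0r.
move=> h1 h2; have := h2 (fun a _ => conj (@expect_ge0 d _ nn (fun A => ler0n _ _)) (hP a)).
rewrite mul0r addr0; exact.
Qed.

Lemma count_usets (T : finType) (X : {set T}) (m : nat) (t : T) (r : nat) :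
  (0 < r)%N -> (r * m <= #|X|)%N ->
  (#|usets X m :&: [set A : {set T} | t \in A]| * r <= #|usets X m|)%N.
Proof.
move=> r0 hm.
case tX: (t \in X); last first.
  have -> : usets X m :&: [set A : {set T} | t \in A] = set0.
    apply/setP => A; rewrite !inE; apply/negP => /andP[/andP[/subsetP sub _] tA].
    by move: (sub t tA); rewrite tX.
  by rewrite cards0.
have e := cardsID [set A : {set T} | t \in A] (usets X m).
have E : usets X m :\: [set A : {set T} | t \in A] = usets (X :\ t) m.
  apply/setP => A; rewrite !inE; apply/idP/idP.
    case/andP => /negbTE tA /andP[sub ->]; rewrite andbT; apply/subsetP => x xA.
    rewrite !inE (subsetP sub x xA) andbT; apply/negP => /eqP ex; by rewrite -ex xA in tA.
  case/andP => sub ->; rewrite andbT.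
  have ->/= : (t \in A) = false by apply/negP => /(subsetP sub); rewrite !inE eqxx.
  by apply/subsetP => x /(subsetP sub); rewrite !inE => /andP[].
rewrite E in e; clear E; move: e hm; rewrite /usets !cards_draws (cardsD1 t X) tX add1n.
set s := #|X :\ t|; move: #|_ :&: _| => c.
case: m => [|m'] /=; first by rewrite !bin0; lia.
rewrite binS => e hm.
have md := mul_bin_diag s.+1 m'; rewrite /= in md.
have ec : c = 'C(s, m') by lia.
rewrite ec.
have hs : (0 < s.+1)%N by [].
rewrite -(leq_pmul2l hs).
have -> : (s.+1 * ('C(s, m') * r) = r * (s.+1 * 'C(s, m')))%N by ring.
rewrite md mulnA; apply: leq_mul => //.
Qed.

Definition good d (r : nat) :=
  [/\ nonneg d, Wt d + diverge_prob d = 1 & forall b, pr d b <= (r%:R)^-1].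

Lemma good_none r : (0 < r)%N -> good [:: (1, None)] r.
Proof.
move=> r0; split.
- by rewrite /nonneg /= ler01.
- by rewrite /Wt /expect /diverge_prob !big_cons !big_nil /=; ring.
- by move=> b; rewrite /pr /expect big_cons big_nil /= mulr0 addr0 invr_ge0 ler0n.
Qed.

Lemma expect_uniform (T : finType) (X : {set T}) m (h : {set T} -> {set N}) g :
  expect (uniform_dist X m h) g = \sum_(A in usets X m) (#|usets X m|%:R)^-1 * g (h A).
Proof. by rewrite /expect /uniform_dist big_map big_enum. Qed.

Lemma uniform_good (T : finType) (X : {set T}) m (h : {set T} -> {set N}) (tb : N -> T) r :
  (0 < r)%N -> (r * m <= #|X|)%N -> (forall b A, b \in h A -> tb b \in A) ->
  good (uniform_dist X m h) r.
Proof.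
move=> r0 hm htb.
set U := usets X m.
have U0 : (0 < #|U|)%N.
  rewrite /U /usets cards_draws bin_gt0; apply: leq_trans hm; by rewrite leq_pmull.
have U0' : 0 < (#|U|%:R : R) by rewrite ltr0n.
split.
- by apply/allP => p /mapP[A _ ->] /=; rewrite invr_ge0 ler0n.
- rewrite /Wt expect_uniform /diverge_prob /uniform_dist big_map [X in _ + X]big1 ?addr0 //.
  rewrite (eq_bigr (fun _ => (#|U|%:R)^-1)); last by move=> A _; rewrite mulr1.
  by rewrite sumr_const -(mulr_natr (#|U|%:R)^-1) mulVf // gt_eqF.
- move=> b; rewrite /pr expect_uniform.
  apply: (@le_trans _ _ (\sum_(A in U) (#|U|%:R)^-1 * ((tb b \in A)%:R : R))).
    apply: ler_sum => A _; apply: ler_wpM2l; first by rewrite invr_ge0 ler0n.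
    by case bA: (b \in h A); rewrite ?ler0n //= (htb _ _ bA).
  rewrite -mulr_sumr -natr_sum.
  have -> : (\sum_(A in U) (tb b \in A : nat))%N = #|U :&: [set A : {set T} | tb b \in A]|.
    rewrite -sum1_card [RHS]big_mkcond [LHS]big_mkcond; apply eq_bigr => A _.
    rewrite in_setI; case: (A \in U) => //=; rewrite inE; by case: (tb b \in A).
  have hc := @count_usets T X m (tb b) r r0 hm.
  rewrite -/U in hc.
  move: (#|_ :&: _|) hc => c hc.
  rewrite mulrC ler_pdivrMr // mulrC ler_pdivlMr ?ltr0n //.
  by rewrite -natrM ler_nat.
Qed.

Lemma card_ord_lt k c : (c <= k)%N -> #|[set j : 'I_k | (j < c)%N]| = c.
Proof.
move=> ck.
have -> : [set j : 'I_k | (j < c)%N] = [set widen_ord ck j | j : 'I_c].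
  apply/setP => j; rewrite !inE; apply/idP/imsetP.
    by move=> jc; exists (Ordinal jc) => //; apply: val_inj.
  by case=> j' _ ->; rewrite /= ltn_ord.
by rewrite card_imset ?card_ord //; by move=> a b /(congr1 val) /= /val_inj.
Qed.

Lemma sieve_good (f : {set N} -> R) k r eps S i fuel X :
  (0 < r)%N -> (r %| k)%N -> good (sieve_loop f k r eps S i fuel X) r.
Proof.
move=> r0 rk; elim: fuel X => [|fuel IH] X /=; first exact: good_none.
case: ifP => kX.
  case: ifP => _.
    apply: (@uniform_good _ _ _ _ id) => //; first by rewrite mulnC divnK // ltnW.
    by move=> b A; rewrite inE => /andP[].
  case: ifP => _; [exact: good_none | exact: IH].
rewrite /sieve_final.
apply: (@uniform_good _ _ _ _ inl) => //.
  rewrite mulnC divnK //.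
  set Y := [set _ | _ : 'I_k & _].
  have dis : (inl @: X) :&: Y = set0.
    apply/setP => x; rewrite !inE; apply/negP => /andP[/imsetP[a _ ->] /imsetP[j _]] //.
  rewrite cardsU dis cards0 subn0 card_imset; last by move=> a b [].
  rewrite /Y card_imset; last by move=> a b [].
  move: (@card_ord_lt k _ (leq_subr #|X| k)); rewrite cardsE => ->.
  move/negbT: kX; rewrite -leqNgt; lia.
by move=> b A; rewrite !inE => /andP[].
Qed.

Lemma expect_flatten (I : Type) (s : seq I) (F : I -> @dist R N) g :
  expect (flatten (map F s)) g = \sum_(p <- s) expect (F p) g.
Proof. by rewrite /expect big_flatten big_map. Qed.

Lemma diverge_flatten (I : Type) (s : seq I) (F : I -> @dist R N) :
  diverge_prob (flatten (map F s)) = \sum_(p <- s) diverge_prob (F p).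
Proof. by rewrite /diverge_prob big_flatten big_map. Qed.

Lemma nonneg_flatten (I : eqType) (s : seq I) (F : I -> @dist R N) :
  (forall p, p \in s -> nonneg (F p)) -> nonneg (flatten (map F s)).
Proof.
rewrite /nonneg; elim: s => [|p s IH] h //=.
by rewrite all_cat h ?mem_head // IH // => q qs; apply: h; rewrite inE qs orbT.
Qed.

Lemma expect_scale w d g : expect [seq (w * q.1, q.2) | q <- d] g = w * expect d g.
Proof. rewrite /expect big_map mulr_sumr; apply eq_bigr => -[v [A|]] _ /=; ring. Qed.

Lemma diverge_scale w d : diverge_prob [seq (w * q.1, q.2) | q <- d] = w * diverge_prob d.
Proof. rewrite /diverge_prob big_map mulr_sumr; apply eq_bigr => -[v [A|]] _ /=; ring. Qed.

Lemma psum_seq0 (I : eqType) (s : seq I) (F : I -> R) :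
  (forall x, x \in s -> 0 <= F x) -> \sum_(x <- s) F x = 0 -> forall x, x \in s -> F x = 0.
Proof.
elim: s => [|a s IH] h //=.
rewrite big_cons => /eqP; rewrite paddr_eq0 ?h ?mem_head //; last first.
  by rewrite big_seq; apply: sumr_ge0 => x xs; apply: h; rewrite inE xs orbT.
case/andP => /eqP Fa /eqP Fs x; rewrite inE => /orP[/eqP -> //|xs].
by apply: IH => // y ys; apply: h; rewrite inE ys orbT.
Qed.

Lemma diverge_ge0 d : nonneg d -> 0 <= diverge_prob d.
Proof.
move=> /allP nn; rewrite /diverge_prob big_seq; apply: sumr_ge0 => -[w [T|]] pd //=.
exact: nn pd.
Qed.

Lemma blits_main (f : {set N} -> R) k r eps (O : {set N}) :
  (forall A, 0 <= f A) -> submodular f -> (0 < r)%N -> (r %| k)%N ->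
  forall m i S, nonneg (blits_run f k r eps m i S) /\
   (diverge_prob (blits_run f k r eps m i S) = 0 ->
    (1 - (r%:R)^-1) ^+ m * f (O :|: S) <= expect (blits_run f k r eps m i S) (fun T => f (O :|: T))).
Proof.
move=> f0 sub r0 rk; elim=> [|m IH] i S.
  split; first by rewrite /nonneg /= ler01.
  by move=> _; rewrite /expect big_cons big_nil /= expr0; lra.
rewrite /=.
set d := sieve f k r eps S i.
have [nnd Wd prd] : good d r by apply: sieve_good.
set F := fun p : R * option {set N} => _.
have nnF : forall p, p \in d -> nonneg (F p).
  move=> [w [T|]] /= pd; have w0 : 0 <= w by move/allP: nnd => /(_ _ pd).
    apply/allP => q /mapP[q' q'd ->] /=; apply: mulr_ge0 => //.
    by case: (IH i.+1 (S :|: T)) => /allP /(_ _ q'd).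
  by rewrite /nonneg /= w0.
split; first exact: nonneg_flatten.
rewrite diverge_flatten expect_flatten => div0.
have Dp0 := @psum_seq0 _ d (fun p => diverge_prob (F p)) (fun p pd => @diverge_ge0 (F p) (nnF p pd)) div0.
have ddiv : diverge_prob d = 0.
  rewrite /diverge_prob big_seq big1 // => -[w [T|]] pd //=.
  by have := Dp0 _ pd; rewrite /F /diverge_prob big_cons big_nil /= addr0.
have W1 : Wt d = 1 by rewrite -Wd ddiv addr0.
rewrite exprS; set c := (1 - r%:R^-1) ^+ m.
have c0 : 0 <= c.
  apply: exprn_ge0; rewrite subr_ge0 invf_le1 ?ltr0n // ler1n //.
pose g T := f (O :|: (S :|: T)).
have subg : submodular g.
  move=> A B; rewrite /g.
  have -> : O :|: (S :|: (A :|: B)) = (O :|: (S :|: A)) :|: (O :|: (S :|: B)).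
    by apply/setP => x; rewrite !inE; case: (x \in O); case: (x \in S).
  have -> : O :|: (S :|: (A :&: B)) = (O :|: (S :|: A)) :&: (O :|: (S :|: B)).
    by apply/setP => x; rewrite !inE; case: (x \in O); case: (x \in S).
  exact: sub.
have ri0 : 0 <= (r%:R : R)^-1 by rewrite invr_ge0 ler0n.
have hb := @buch g d (r%:R^-1) subg (fun A => f0 _) nnd ri0 prd.
rewrite W1 /g setU0 in hb.
apply: (@le_trans _ _ (c * expect d g)).
  rewrite [_ * c]mulrC -mulrA; apply: ler_wpM2l => //; rewrite mulrC; exact: hb.
rewrite -expectZ /expect big_seq [X in _ <= X]big_seq; apply: ler_sum => -[w [T|]] pd /=; last first.
  by rewrite /expect big_cons big_nil /= !mulr0 addr0.
have w0 : 0 <= w by move/allP: nnd => /(_ _ pd).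
rewrite -/(expect _ _) expect_scale.
have := Dp0 _ pd; rewrite /F diverge_scale => /eqP; rewrite mulf_eq0 => /orP[/eqP -> |/eqP dv0].
  by rewrite !mul0r.
apply: ler_wpM2l => //.
case: (IH i.+1 (S :|: T)) => _ /(_ dv0); rewrite /g; exact.
Qed.
End H.

Theorem lemma4 (R : realFieldType) (N : finType) (f : {set N} -> R)
  (k r : nat) (eps : R) (i : nat) (O : {set N}) :
  (forall A : {set N}, 0 <= f A) ->
  submodular f ->
  (0 < k)%N -> (0 < r)%N -> (r %| k)%N -> 0 < eps ->
  (1 <= i <= r)%N ->
  (#|O| <= k)%N -> (forall A : {set N}, (#|A| <= k)%N -> f A <= f O) ->
  diverge_prob (blits_run f k r eps i.-1 1 set0) = 0 ->
  (1 - (r%:R)^-1) ^+ i.-1 * OPT f k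
    <= expect (blits_run f k r eps i.-1 1 set0) (fun S => f (O :|: S)).
Proof.
move=> f0 sub k0 r0 rk eps0 hi hO hmax hdiv.
have [_ h] := @blits_main R N f k r eps O f0 sub r0 rk i.-1 1 set0.
have := h hdiv; rewrite setU0.
have c0 : 0 <= (1 - (r%:R : R)^-1) ^+ i.-1.
  apply: exprn_ge0; rewrite subr_ge0 invf_le1 ?ltr0n // ler1n //.
have : OPT f k <= f O.
  rewrite /OPT; apply: (big_ind (fun x => x <= f O)).
  - by apply: hmax; rewrite cards0.
  - by move=> x y hx hy; rewrite ge_max hx hy.
  - by move=> A /hmax.
move=> hopt; apply: le_trans; exact: ler_wpM2l.
Qed.
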